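(* Let $P$ be a poset. Let $F_P:\mathbf{JF}_P\to\mathbf{JC}_P$ be the functor sending a frame-generating join-specification $\mathcal{U}$ to the join-completion $\eta:P\to\mathcal{I}_{\mathcal{U}}$, $p\mapsto p^\downarrow$, and sending an inclusion $\mathcal{U}_1\subseteq\mathcal{U}_2$ to the unique frame morphism $\mathcal{I}_{\mathcal{U}_1}\to\mathcal{I}_{\mathcal{U}_2}$ with $p^\downarrow\mapsto p^\downarrow$. Let $G_P:\mathbf{JC}_P\to\mathbf{JF}_P$ send a join-completion $e$ to $(\mathcal{U}_e)^-$ and an arrow $e_1\to e_2$ to the inclusion $(\mathcal{U}_{e_1})^-\subseteq(\mathcal{U}_{e_2})^-$. Then $F_P$ is left adjoint to $G_P$.
   Context: A join-specification for $P$ is a set $\mathcal{U}\subseteq\wp(P)$ such that $\bigvee S$ exists in $P$ for every $S\in\mathcal{U}$ and $\{p\}\in\mathcal{U}$ for every $p\in P$. A $\mathcal{U}$-ideal is a down-closed $C\subseteq P$ with $\bigvee S\in C$ whenever $S\in\mathcal{U}$, $S\subseteq C$; $\mathcal{I}_{\mathcal{U}}$ is the complete lattice of $\mathcal{U}$-ideals under inclusion; $\mathcal{U}$ is frame-generating if $\mathcal{I}_{\mathcal{U}}$ is a frame. A frame morphism is a lattice homomorphism preserving arbitrary joins. $\mathbf{JF}_P$ is the poset (thin category) of frame-generating join-specifications for $P$ under inclusion. A join-completion of $P$ is an order embedding $e:P\to L$ into a complete lattice $L$ such that every $x\in L$ is the join of $\{e(p):e(p)\le x\}$. $\mathbf{JC}_P$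 is the category whose objects are join-completions of $P$ and whose arrows $e_1\to e_2$ (for $e_i:P\to L_i$) are completely join-preserving maps $f:L_1\to L_2$ with $f\circ e_1=e_2$. For a join-completion $e:P\to L$, $\mathcal{U}_e=\{S\subseteq P:\bigvee S\text{ exists in }P\text{ and }e(\bigvee S)=\bigvee e[S]\}$ (equivalently $\bigvee S\in\Gamma_e(S)$, where $\Gamma_e$ is the closure operator whose closed sets are the sets $e^{-1}(x^\downarrow)$, $x\in L$). For a join-specification $\mathcal{V}$, $\mathcal{V}^-$ is the largest frame-generating join-specification contained in $\mathcal{V}$ (which exists). *)

(* Defs.v *)
Definition is_join {T : Type} (le : T -> T -> Prop) (S : T -> Prop) (x : T) : Prop :=
  (forall s, S s -> le s x) /\ (forall y, (forall s, S s -> le s y) -> le x y).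

Definition is_meet2 {T : Type} (le : T -> T -> Prop) (a b m : T) : Prop :=
  le m a /\ le m b /\ (forall y, le y a -> le y b -> le y m).

Definition complete {T : Type} (le : T -> T -> Prop) : Prop :=
  forall S : T -> Prop, exists x, is_join le S x.

Definition frame {T : Type} (le : T -> T -> Prop) : Prop :=
  complete le /\
  forall (a : T) (S : T -> Prop) (j m : T),
    is_join le S j -> is_meet2 le a j m ->
    is_join le (fun y => exists s, S s /\ is_meet2 le a s y) m.

Definition join_preserving {T1 T2 : Type} (le1 : T1 -> T1 -> Prop)
  (le2 : T2 -> T2 -> Prop) (f : T1 -> T2) : Prop :=
  forall (S : T1 -> Prop) (x : T1), is_join le1 S x ->
    is_join le2 (fun y => exists s, S s /\ y = f s) (f x).

Record Poset := {
  car :> Type;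
  le : car -> car -> Prop;
  le_refl : forall x, le x x;
  le_trans : forall x y z, le x y -> le y z -> le x z;
  le_antisym : forall x y, le x y -> le y x -> x = y
}.
Arguments le {p} _ _.

Definition complete_lattice (L : Poset) : Prop := complete (@le L).

Definition setsys (P : Poset) := (P -> Prop) -> Prop.

Definition subsys {P : Poset} (U V : setsys P) : Prop := forall S, U S -> V S.

Definition join_spec {P : Poset} (U : setsys P) : Prop :=
  (forall S, U S -> exists x, is_join (@le P) S x) /\
  (forall p : P, U (fun q => q = p)).

Definition down_closed {P : Poset} (C : P -> Prop) : Prop :=
  forall p q : P, le p q -> C q -> C p.

Definition is_U_ideal {P : Poset} (U : setsys P) (C : P -> Prop) : Prop :=
  down_closed C /\
  forall S x, U S -> (forall s, S s -> C s) -> is_join (@le P) S x -> C x.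

Definition Uideal {P : Poset} (U : setsys P) := { C : P -> Prop | is_U_ideal U C }.

Definition incl {P : Poset} {U : setsys P} (C D : Uideal U) : Prop :=
  forall p, proj1_sig C p -> proj1_sig D p.

Definition frame_generating {P : Poset} (U : setsys P) : Prop :=
  frame (@incl P U).

Lemma down_is_U_ideal {P : Poset} (U : setsys P) (p : P) :
  is_U_ideal U (fun q => le q p).
Proof.
  split.
  - intros a b Hab Hb. exact (le_trans P _ _ _ Hab Hb).
  - intros S x _ HS [_ Hx]. apply Hx. exact HS.
Qed.

Definition eta {P : Poset} (U : setsys P) (p : P) : Uideal U :=
  exist _ (fun q => le q p) (down_is_U_ideal U p).

Definition join_completion {P L : Poset} (e : P -> L) : Prop :=
  complete_lattice L /\
  (forall p q : P, le p q <-> le (e p) (e q)) /\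
  (forall x : L, is_join (@le L) (fun y => exists p, y = e p /\ le (e p) x) x).

Definition U_of {P L : Poset} (e : P -> L) : setsys P :=
  fun S => (exists x, is_join (@le P) S x) /\
           (forall x, is_join (@le P) S x ->
                      is_join (@le L) (fun y => exists s, S s /\ y = e s) (e x)).

Definition is_minus {P : Poset} (V W : setsys P) : Prop :=
  join_spec W /\ frame_generating W /\ subsys W V /\
  (forall W', join_spec W' -> frame_generating W' -> subsys W' V -> subsys W' W).

(* Hom_{JC_P}(F_P U, e): completely join-preserving f : I_U -> L with
   f o eta = e *)
Definition Hom_FU {P L : Poset} (U : setsys P) (e : P -> L) : Type :=
  { f : Uideal U -> L | join_preserving (@incl P U) (@le L) f /\
                        forall p, f (eta U p) = e p }.

(* Hom_{JF_P}(U, G_P e) is the (proof-irrelevant) proposition U ⊆ W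
   where W = (U_e)^-. *)

(* Main.v *)
Require Import Defs.
From Stdlib Require Import ClassicalEpsilon.

Lemma join_unique {L : Poset} (S : L -> Prop) x y :
  is_join (@le L) S x -> is_join (@le L) S y -> x = y.
Proof.
  intros [H1 H2] [H3 H4]. apply le_antisym; [apply H2 | apply H4]; assumption.
Qed.

Lemma join_ext {T} (le0 : T -> T -> Prop) (S S' : T -> Prop) x :
  (forall z, S z <-> S' z) -> is_join le0 S x -> is_join le0 S' x.
Proof.
  intros E [H1 H2]. split.
  - intros s Hs. apply H1, E, Hs.
  - intros y Hy. apply H2. intros s Hs. apply Hy, E, Hs.
Qed.

Definition supE {P L : Poset} (e : P -> L) (Hc : complete (@le L))
  (C : P -> Prop) : L :=
  proj1_sig (constructive_indefinite_description _
    (Hc (fun y => exists p, C p /\ y = e p))).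

Lemma supE_spec {P L : Poset} (e : P -> L) Hc C :
  is_join (@le L) (fun y => exists p, C p /\ y = e p) (supE e Hc C).
Proof. unfold supE. destruct constructive_indefinite_description; simpl; auto. Qed.

Lemma ideal_join {P : Poset} (U : setsys P) (C : Uideal U) :
  is_join (@incl P U) (fun D => exists p, proj1_sig C p /\ D = eta U p) C.
Proof.
  split.
  - intros D [p [Hp ->]] q Hq. simpl in Hq.
    destruct (proj2_sig C) as [Hd _]. exact (Hd _ _ Hq Hp).
  - intros D HD p Hp. apply (HD (eta U p)). exists p; split; auto.
    simpl. apply le_refl.
Qed.

Theorem theorem5p13 :
  forall (P : Poset) (U : setsys P),
    join_spec U -> frame_generating U ->
  forall (L : Poset) (e : P -> L), join_completion e ->
  forall W : setsys P, is_minus (U_of e) W ->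
    exists (phi : Hom_FU U e -> subsys U W) (psi : subsys U W -> Hom_FU U e),
      forall h : Hom_FU U e, forall C : Uideal U,
        proj1_sig (psi (phi h)) C = proj1_sig h C.
Proof.
  intros P U HU HfU L e [Hc [Hmono Hjc]] W [HWs [HWf [HWsub HWmax]]].
  assert (phi : Hom_FU U e -> subsys U W).
  { intros [h [Hjp Heta]]. apply HWmax; auto.
    intros S HS. split.
    - exact (proj1 HU S HS).
    - intros x Hx.
      assert (Hj : is_join (@incl P U) (fun D => exists s, S s /\ D = eta U s) (eta U x)).
      { split.
        - intros D [s [Hs ->]] q Hq. simpl in *.
          exact (le_trans P _ _ _ Hq (proj1 Hx s Hs)).
        - intros D HD q Hq. simpl in Hq.
          destruct D as [D [Hd Hcl]]. simpl in *.
          apply (Hd _ _ Hq). apply (Hcl S x HS); auto.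
          intros s Hs. apply (HD (eta U s)). exists s; split; auto.
          simpl. apply le_refl. }
      specialize (Hjp _ _ Hj). rewrite Heta in Hjp.
      revert Hjp. apply join_ext. intros z; split.
      + intros [D [[s [Hs ->]] ->]]. exists s; split; auto.
      + intros [s [Hs ->]]. exists (eta U s); split; eauto. }
  assert (psi : subsys U W -> Hom_FU U e).
  { intros HUW.
    exists (fun C => supE e Hc (proj1_sig C)). split.
    - intros S X HX. split.
      + intros y [C [HC ->]]. apply (proj2 (supE_spec e Hc _)).
        intros z [p [Hp ->]]. apply (proj1 (supE_spec e Hc _)).
        exists p; split; auto. apply (proj1 HX C HC p Hp).
      + intros y Hy. apply (proj2 (supE_spec e Hc _)).
        intros z [p [Hp ->]].
        assert (HD : is_U_ideal U (fun q => le (e q) y)).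
        { split.
          - intros a b Hab Hb. eapply le_trans; [apply Hmono, Hab | exact Hb].
          - intros T x HT HTs Hx.
            destruct (HWsub T (HUW T HT)) as [_ H2].
            apply (proj2 (H2 x Hx)). intros z [s [Hs ->]]. apply HTs, Hs. }
        apply ((proj2 HX) (exist _ _ HD)); auto.
        intros C HC q Hq. simpl.
        eapply le_trans; [| apply Hy; exists C; split; eauto].
        apply (proj1 (supE_spec e Hc _)). exists q; split; auto.
    - intros p. symmetry. apply (join_unique (fun y => exists q, proj1_sig (eta U p) q /\ y = e q)).
      + split.
        * intros z [q [Hq ->]]. apply Hmono, Hq.
        * intros y Hy. apply Hy. exists p; split; auto. simpl. apply le_refl.
      + apply supE_spec. }
  exists phi, psi. intros h C.
  destruct (psi (phi h)) as [f [Hf Hfe]]. simpl.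
  destruct h as [h [Hh Hhe]]. simpl.
  assert (E : forall (g : Uideal U -> L), join_preserving (@incl P U) (@le L) g ->
            (forall p, g (eta U p) = e p) ->
            is_join (@le L) (fun y => exists p, proj1_sig C p /\ y = e p) (g C)).
  { intros g Hg Hge. specialize (Hg _ _ (ideal_join U C)). revert Hg.
    apply join_ext. intros z; split.
    - intros [D [[p [Hp ->]] ->]]. exists p; split; auto.
    - intros [p [Hp ->]]. exists (eta U p); split; eauto. }
  exact (join_unique _ _ _ (E f Hf Hfe) (E h Hh Hhe)).
Qed.
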